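(* There are constants $c>0$ and $\lambda\geq 1$ such that for all sufficiently large $n$ and all parameters $r\ge 0$, $0<\epsilon\leq 1$, $R$ with $\epsilon<R$ and $c\sqrt{\log n}\leq R\leq\sqrt n$ the following holds. Let $m=\lceil\sqrt{5n}/R\rceil$ and partition the square $[0,\sqrt n]^2$ into $m\times m$ congruent square cells. If the positions $P_{1},\dots,P_{n}$ of the $n$ nodes are independent, each distributed according to the stationary distribution $\pi$ of the single-node random walk on $M_{n,r,\epsilon}$, then with probability at least $1-1/n^2$, every cell contains at least $R^2/\lambda$ and at most $\lambda R^2$ nodes.
   Context: $L_{n,\epsilon}=\{(i\epsilon,j\epsilon): i,j\in\mathbb{N},\ i,j\le\sqrt n/\epsilon\}$. The move graph $M_{n,r,\epsilon}$ has vertex set $L_{n,\epsilon}$ and edges between $\mathbf{x},\mathbf{y}$ with Euclidean distance $d(\mathbf{x},\mathbf{y})\le r$; $\Gamma(\mathbf{x})=\{\mathbf{y}\in L_{n,\epsilon}: d(\mathbf{x},\mathbf{y})\le r\}$ (it contains $\mathbf{x}$). Each node moves by a Markov chain: from position $\mathbf{x}$ it moves to a uniformly random point of $\Gamma(\mathbf{x})$. Its stationary distribution is $\pi(\mathbf{x})=|\Gamma(\mathbf{x})|/\sum_{\mathbf{y}\in L_{n,\epsilon}}|\Gamma(\mathbf{y})|$. A node belongs to a cell if its position lies in the cell (for points on cell boundaries, each point of $L_{n,\epsilon}$ is assigned to exactly one cell). *)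

(* Defs.v *)
From Stdlib Require Import Reals Lra ZArith List Arith Bool.
Import ListNotations.
Open Scope R_scope.

(* Lattice points (i*eps, j*eps) are represented by their index pair (i,j). *)
Definition pt : Type := (nat * nat)%type.

Definition Rfloor (x : R) : Z := (up x - 1)%Z.
Definition Rceil (x : R) : Z := (- Rfloor (- x))%Z.

Definition Rleb (x y : R) : bool := if Rle_dec x y then true else false.

Definition lat_bound (n : nat) (eps : R) : nat :=
  Z.to_nat (Rfloor (sqrt (INR n) / eps)).

Definition lattice (n : nat) (eps : R) : list pt :=
  list_prod (seq 0 (S (lat_bound n eps))) (seq 0 (S (lat_bound n eps))).

Definition xcoord (eps : R) (p : pt) : R := INR (fst p) * eps.
Definition ycoord (eps : R) (p : pt) : R := INR (snd p) * eps.

Definition dist (eps : R) (p q : pt) : R :=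
  sqrt ((xcoord eps p - xcoord eps q) ^ 2 + (ycoord eps p - ycoord eps q) ^ 2).

Definition Gamma (n : nat) (r eps : R) (p : pt) : list pt :=
  filter (fun q => Rleb (dist eps p q) r) (lattice n eps).

Definition Rsum {A : Type} (l : list A) (f : A -> R) : R :=
  fold_right (fun x acc => f x + acc) 0 l.

Definition pi_stat (n : nat) (r eps : R) (p : pt) : R :=
  INR (length (Gamma n r eps p)) /
  Rsum (lattice n eps) (fun q => INR (length (Gamma n r eps q))).

Fixpoint tuple_sum (L : list pt) (w : pt -> R) (k : nat) (f : list pt -> R) : R :=
  match k with
  | O => f []
  | S k' => Rsum L (fun p => w p * tuple_sum L w k' (fun l => f (p :: l)))
  end.

(* probability that n i.i.d. pi-distributed positions P_1..P_n satisfy E *)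
Definition prob_positions (n : nat) (r eps : R) (E : list pt -> bool) : R :=
  tuple_sum (lattice n eps) (pi_stat n r eps) n (fun l => if E l then 1 else 0).

Definition num_cells (n : nat) (Rr : R) : nat :=
  Z.to_nat (Rceil (sqrt (5 * INR n) / Rr)).

Definition cell_side (n : nat) (Rr : R) : R := sqrt (INR n) / INR (num_cells n Rr).

Definition valid_assignment (n : nat) (eps Rr : R) (asg : pt -> nat * nat) : Prop :=
  forall p, In p (lattice n eps) ->
    let m := num_cells n Rr in
    let s := cell_side n Rr in
    (fst (asg p) < m)%nat /\ (snd (asg p) < m)%nat /\
    INR (fst (asg p)) * s <= xcoord eps p <= INR (S (fst (asg p))) * s /\
    INR (snd (asg p)) * s <= ycoord eps p <= INR (S (snd (asg p))) * s.

Definition cell_count (asg : pt -> nat * nat) (a b : nat) (l : list pt) : nat :=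
  length (filter (fun p => andb (Nat.eqb (fst (asg p)) a) (Nat.eqb (snd (asg p)) b)) l).

Definition all_cells_balanced (m : nat) (asg : pt -> nat * nat) (Rr lam : R)
  (l : list pt) : bool :=
  forallb (fun a => forallb (fun b =>
      andb (Rleb (Rr ^ 2 / lam) (INR (cell_count asg a b l)))
      (Rleb (INR (cell_count asg a b l)) (lam * Rr ^ 2)))
    (seq 0 m)) (seq 0 m).

(* Main.v *)
Require Import Defs.
From Stdlib Require Import Reals Lra Lia ZArith List Arith Bool.
Import ListNotations.
Open Scope R_scope.

Lemma Rsum_nil {A} (f : A -> R) : Rsum [] f = 0. Proof. reflexivity. Qed.
Lemma Rsum_cons {A} (x : A) l f : Rsum (x :: l) f = f x + Rsum l f. Proof. reflexivity. Qed.

Lemma Rsum_app {A} (l1 l2 : list A) f : Rsum (l1 ++ l2) f = Rsum l1 f + Rsum l2 f.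
Proof. induction l1; simpl app; rewrite ?Rsum_cons, ?Rsum_nil; [lra|]. rewrite IHl1. lra. Qed.

Lemma Rsum_map {A B} (g : A -> B) l f : Rsum (map g l) f = Rsum l (fun x => f (g x)).
Proof. induction l; simpl map; [reflexivity|]. rewrite !Rsum_cons, IHl. reflexivity. Qed.

Lemma Rsum_ext_in {A} (l : list A) f g : (forall x, In x l -> f x = g x) -> Rsum l f = Rsum l g.
Proof. induction l; intros H; [reflexivity|]. rewrite !Rsum_cons, H, IHl; auto with datatypes. Qed.

Lemma Rsum_le_in {A} (l : list A) f g : (forall x, In x l -> f x <= g x) -> Rsum l f <= Rsum l g.
Proof. induction l; intros H; rewrite ?Rsum_nil; [lra|]. rewrite !Rsum_cons.
  assert (f a <= g a) by (apply H; now left). assert (Rsum l f <= Rsum l g) by (apply IHl; intros; apply H; now right). lra. Qed.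

Lemma Rsum_scal {A} (l : list A) c f : Rsum l (fun x => c * f x) = c * Rsum l f.
Proof. induction l; rewrite ?Rsum_nil, ?Rsum_cons; [lra|]. rewrite IHl; lra. Qed.

Lemma Rsum_plus {A} (l : list A) f g : Rsum l (fun x => f x + g x) = Rsum l f + Rsum l g.
Proof. induction l; rewrite ?Rsum_nil, ?Rsum_cons; [lra|]. rewrite IHl; lra. Qed.

Lemma Rsum_const {A} (l : list A) c : Rsum l (fun _ => c) = INR (length l) * c.
Proof. induction l; rewrite ?Rsum_nil, ?Rsum_cons; simpl length; [simpl; lra|]. rewrite IHl, S_INR; lra. Qed.

Lemma Rsum_nonneg {A} (l : list A) f : (forall x, In x l -> 0 <= f x) -> 0 <= Rsum l f.
Proof. intros H. replace 0 with (Rsum l (fun _ => 0)). apply Rsum_le_in; auto.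
  rewrite Rsum_const; lra. Qed.

Lemma Rsum_ge_elem {A} (l : list A) f y : (forall x, In x l -> 0 <= f x) -> In y l -> f y <= Rsum l f.
Proof. induction l; intros H Hy; [destruct Hy|]. rewrite Rsum_cons. destruct Hy as [->|Hy].
  - assert (0 <= Rsum l f) by (apply Rsum_nonneg; intros; apply H; now right). lra.
  - assert (f y <= Rsum l f) by (apply IHl; auto; intros; apply H; now right).
    assert (0 <= f a) by (apply H; now left). lra. Qed.

Lemma Rsum_prod {A B} (l1 : list A) (l2 : list B) F :
  Rsum (list_prod l1 l2) F = Rsum l1 (fun i => Rsum l2 (fun j => F (i, j))).
Proof. induction l1; simpl list_prod; [reflexivity|]. rewrite Rsum_app, Rsum_map, IHl1, Rsum_cons. reflexivity. Qed.

Lemma length_filter_R {A} (f : A -> bool) l : INR (length (filter f l)) = Rsum l (fun x => if f x then 1 else 0).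
Proof. induction l; [reflexivity|]. simpl filter. rewrite Rsum_cons. destruct (f a); simpl length; rewrite ?S_INR, IHl; lra. Qed.

Definition sN (n : nat) (f : nat -> R) := Rsum (seq 0 n) f.

Lemma sN_0 f : sN 0 f = 0. Proof. reflexivity. Qed.

Lemma sN_S (n : nat) f : sN (S n) f = sN n f + f n.
Proof. unfold sN. rewrite seq_S, Rsum_app, Rsum_cons, Rsum_nil. simpl. lra. Qed.

Lemma sN_head (n : nat) f : sN (S n) f = f 0%nat + sN n (fun i => f (S i)).
Proof. unfold sN. simpl seq. rewrite Rsum_cons, <- seq_shift, Rsum_map. reflexivity. Qed.

Lemma sN_nonneg n f : (forall a, 0 <= f a) -> 0 <= sN n f.
Proof. intros; apply Rsum_nonneg; auto. Qed.

Lemma sN_mono j k f : (forall a, 0 <= f a) -> (j <= k)%nat -> sN j f <= sN k f.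
Proof. intros H Hjk. induction Hjk; [lra|]. rewrite sN_S. specialize (H m). lra. Qed.

Lemma sN_le n f g : (forall a, (a < n)%nat -> f a <= g a) -> sN n f <= sN n g.
Proof. intros H. apply Rsum_le_in. intros x Hx. apply in_seq in Hx. apply H. lia. Qed.

Definition ad (i q : nat) : nat := ((i - q) + (q - i))%nat.

Section OneD.
Variable h : nat -> R.
Hypothesis hpos : forall a, 0 <= h a.
Definition Fh n q := sN n (fun i => h (ad i q)).

Lemma Fh_shift n q : Fh (S n) (S q) = h (S q) + Fh n q.
Proof. unfold Fh. rewrite sN_head. reflexivity. Qed.

Lemma Fh_0 n : Fh n 0 = sN n h.
Proof. unfold Fh, sN. apply Rsum_ext_in. intros. unfold ad. f_equal. lia. Qed.

Lemma Fh_up q : forall n, Fh n q <= sN n h + sN q (fun a => h (S a)).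
Proof. induction q; intros n.
  - rewrite Fh_0, sN_0. lra.
  - destruct n.
    + unfold Fh. rewrite !sN_0.
      apply Rplus_le_le_0_compat; [lra|]. apply sN_nonneg. auto.
    + rewrite Fh_shift. specialize (IHq n). rewrite (sN_S q).
      assert (sN n h <= sN (S n) h) by (apply sN_mono; auto). lra.
Qed.

Lemma Fh_up2 q n : (q < n)%nat -> Fh n q <= 2 * sN n h.
Proof. intros Hq. pose proof (Fh_up q n).
  assert (sN q (fun a => h (S a)) <= sN n h).
  { rewrite <- (Rplus_0_l (sN q _)). apply Rle_trans with (h 0%nat + sN q (fun a => h (S a))).
    specialize (hpos 0%nat). lra. rewrite <- sN_head. apply sN_mono; auto. }
  lra. Qed.

Lemma Fh_lowA q : forall n, sN (n - q) h <= Fh n q.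
Proof. induction q; intros n.
  - rewrite Fh_0. rewrite Nat.sub_0_r. lra.
  - destruct n.
    + unfold Fh. simpl (0 - S q)%nat. rewrite !sN_0. lra.
    + rewrite Fh_shift. simpl (S n - S q)%nat. specialize (IHq n). specialize (hpos (S q)). lra.
Qed.

Lemma Fh_lowB q : forall n, (q < n)%nat -> sN (S q) h <= Fh n q.
Proof. induction q; intros n Hn.
  - rewrite Fh_0. apply sN_mono; auto.
  - destruct n; [lia|]. rewrite Fh_shift, sN_S. specialize (IHq n ltac:(lia)). lra.
Qed.

Lemma Fh_low K q : (q <= K)%nat -> sN (K / 2 + 1) h <= Fh (S K) q.
Proof. intros Hq. assert (H2 := Nat.div_mod K 2 ltac:(lia)). assert (Hm := Nat.mod_upper_bound K 2 ltac:(lia)).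
  destruct (le_lt_dec q (K/2)).
  - eapply Rle_trans; [|apply Fh_lowA]. apply sN_mono; auto. lia.
  - eapply Rle_trans; [|apply Fh_lowB; lia]. apply sN_mono; auto. lia.
Qed.
End OneD.

Lemma sN_half (g : nat -> R) : (forall a, 0 <= g a) -> (forall e a, (e <= a)%nat -> g a <= g e) ->
  forall m, sN (2 * m) g <= 2 * sN m g.
Proof. intros Hp Ha. induction m.
  - rewrite Nat.mul_0_r, !sN_0. lra.
  - replace (2 * S m)%nat with (S (S (2 * m))) by lia. rewrite !sN_S.
    assert (g (2*m)%nat <= g m) by (apply Ha; lia). assert (g (S (2*m)) <= g m) by (apply Ha; lia). lra.
Qed.

Lemma sN_half2 (g : nat -> R) K : (forall a, 0 <= g a) -> (forall e a, (e <= a)%nat -> g a <= g e) ->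
  sN (S K) g <= 2 * sN (K / 2 + 1) g.
Proof. intros Hp Ha. eapply Rle_trans; [|apply sN_half; auto]. apply sN_mono; auto.
  assert (H2 := Nat.div_mod K 2 ltac:(lia)). assert (Hm := Nat.mod_upper_bound K 2 ltac:(lia)). lia. Qed.


Section TS.
Variable L : list pt.
Variable w : pt -> R.

Lemma ts_S k f : tuple_sum L w (S k) f = Rsum L (fun p => w p * tuple_sum L w k (fun l => f (p :: l))).
Proof. reflexivity. Qed.

Lemma ts_ext k : forall f g, (forall l, f l = g l) -> tuple_sum L w k f = tuple_sum L w k g.
Proof. induction k; intros f g H; [apply H|]. rewrite !ts_S. apply Rsum_ext_in. intros.
  f_equal. apply IHk. intros; apply H. Qed.

Lemma ts_scal k : forall c f, tuple_sum L w k (fun l => c * f l) = c * tuple_sum L w k f.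
Proof. induction k; intros c f; [reflexivity|]. rewrite !ts_S.
  rewrite <- Rsum_scal. apply Rsum_ext_in. intros. rewrite (IHk c (fun l => f (x :: l))). ring. Qed.

Lemma ts_plus k : forall f g, tuple_sum L w k (fun l => f l + g l) = tuple_sum L w k f + tuple_sum L w k g.
Proof. induction k; intros f g; [reflexivity|]. rewrite !ts_S, <- Rsum_plus.
  apply Rsum_ext_in. intros. rewrite (IHk (fun l => f (x :: l)) (fun l => g (x :: l))). ring. Qed.

Hypothesis wpos : forall p, In p L -> 0 <= w p.

Lemma ts_mono k : forall f g, (forall l, f l <= g l) -> tuple_sum L w k f <= tuple_sum L w k g.
Proof. induction k; intros f g H; [apply H|]. rewrite !ts_S. apply Rsum_le_in. intros.
  apply Rmult_le_compat_l; auto. Qed.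

Definition prodl (G : pt -> R) (l : list pt) : R := fold_right (fun x a => G x * a) 1 l.

Lemma ts_prod k : forall G, tuple_sum L w k (prodl G) = (Rsum L (fun p => w p * G p)) ^ k.
Proof. induction k; intros G; [reflexivity|]. rewrite ts_S. simpl pow.
  rewrite Rmult_comm, <- Rsum_scal. apply Rsum_ext_in. intros.
  rewrite (ts_ext k _ (fun l => G x * prodl G l)) by reflexivity. rewrite ts_scal, IHk. ring. Qed.

Lemma ts_const k c : tuple_sum L w k (fun _ => c) = c * (Rsum L w) ^ k.
Proof. rewrite (ts_ext k _ (fun l => c * prodl (fun _ => 1) l)).
  - rewrite ts_scal, ts_prod. f_equal. f_equal. apply Rsum_ext_in; intros; ring.
  - intros l. assert (prodl (fun _ => 1) l = 1) by (induction l; simpl; auto; rewrite IHl; ring).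
    rewrite H; ring. Qed.

Lemma ts_Rsum {A} (C : list A) k F : tuple_sum L w k (fun l => Rsum C (fun c => F c l)) = Rsum C (fun c => tuple_sum L w k (F c)).
Proof. induction C.
  - rewrite Rsum_nil. rewrite (ts_ext k _ (fun _ => 0)) by reflexivity. rewrite ts_const. ring.
  - rewrite Rsum_cons. rewrite (ts_ext k _ (fun l => F a l + Rsum C (fun c => F c l))) by reflexivity.
    rewrite ts_plus, IHC. reflexivity. Qed.
End TS.


Lemma sq_ad (i q : nat) e : (INR q * e - INR i * e) ^ 2 = (INR (ad i q) * e) ^ 2.
Proof. unfold ad. destruct (le_lt_dec i q).
  - replace (i - q)%nat with 0%nat by lia. rewrite Nat.add_0_l, minus_INR by lia. ring.
  - replace (q - i)%nat with 0%nat by lia. rewrite Nat.add_0_r, minus_INR by lia. ring. Qed.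

Lemma in_lattice n eps i j : In (i, j) (lattice n eps) <-> (i <= lat_bound n eps /\ j <= lat_bound n eps)%nat.
Proof. unfold lattice. rewrite in_prod_iff, !in_seq. lia. Qed.

Section Geo.
Variables (n : nat) (r eps : R).
Hypothesis reps : 0 < eps.
Hypothesis rpos : 0 <= r.
Let K := lat_bound n eps.
Let M := (K / 2 + 1)%nat.

Definition phi' (a b : nat) : R := if Rleb (sqrt ((INR a * eps) ^ 2 + (INR b * eps) ^ 2)) r then 1 else 0.

Lemma phi'_range a b : 0 <= phi' a b <= 1.
Proof. unfold phi'. destruct (Rleb _ _); lra. Qed.

Lemma phi'_anti a b a' b' : (a <= a')%nat -> (b <= b')%nat -> phi' a' b' <= phi' a b.
Proof. intros Ha Hb. unfold phi', Rleb.
  destruct (Rle_dec (sqrt ((INR a' * eps) ^ 2 + (INR b' * eps) ^ 2)) r) as [H|H]; 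
  destruct (Rle_dec (sqrt ((INR a * eps) ^ 2 + (INR b * eps) ^ 2)) r) as [H'|H']; try lra.
  exfalso. apply H'. eapply Rle_trans; [|apply H]. apply sqrt_le_1_alt.
  apply le_INR in Ha. apply le_INR in Hb. pose proof (pos_INR a). pose proof (pos_INR b).
  apply Rplus_le_compat; apply pow_incr; split; nra. Qed.

Lemma phi'_00 : phi' 0 0 = 1.
Proof. unfold phi', Rleb. simpl INR. replace ((0 * eps) ^ 2 + (0 * eps) ^ 2) with 0 by ring.
  rewrite sqrt_0. destruct (Rle_dec 0 r); lra. Qed.

Lemma Gamma_count p : INR (length (Gamma n r eps p)) =
  sN (S K) (fun i => sN (S K) (fun j => phi' (ad i (fst p)) (ad j (snd p)))).
Proof. unfold Gamma. rewrite length_filter_R. unfold lattice. rewrite (@Rsum_prod nat nat). fold K.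
  unfold sN. apply Rsum_ext_in. intros i _. apply Rsum_ext_in. intros j _.
  unfold phi', Defs.dist, xcoord, ycoord. destruct p as [pi pj]; simpl fst; simpl snd.
  rewrite !sq_ad. reflexivity. Qed.

Definition Hf (a : nat) : R := sN M (fun b => phi' a b).
Definition Sg : R := sN M Hf.

Lemma Hf_pos a : 0 <= Hf a.
Proof. apply sN_nonneg. intros; apply phi'_range. Qed.

Lemma Hf_anti e a : (e <= a)%nat -> Hf a <= Hf e.
Proof. intros. apply sN_le. intros. apply phi'_anti; lia. Qed.

Lemma Sg_pos : 1 <= Sg.
Proof. unfold Sg. unfold M. rewrite Nat.add_1_r, sN_head.
  assert (1 <= Hf 0). { unfold Hf. unfold M. rewrite Nat.add_1_r, sN_head, phi'_00.
    pose proof (sN_nonneg (K/2) (fun i => phi' 0 (S i)) ltac:(intros; apply phi'_range)). lra. }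
  pose proof (sN_nonneg (K/2) (fun i => Hf (S i)) ltac:(intros; apply Hf_pos)). lra. Qed.

Lemma Gamma_up p : In p (lattice n eps) -> INR (length (Gamma n r eps p)) <= 16 * Sg.
Proof. destruct p as [pi pj]. rewrite in_lattice. fold K. intros [Hi Hj].
  rewrite Gamma_count. simpl fst; simpl snd.
  apply Rle_trans with (sN (S K) (fun i => 4 * Hf (ad i pi))).
  - apply sN_le. intros i _.
    change (sN (S K) (fun j => phi' (ad i pi) (ad j pj))) with (Fh (phi' (ad i pi)) (S K) pj).
    eapply Rle_trans; [apply Fh_up2; [intros; apply phi'_range| lia]|].
    unfold Hf. fold M. pose proof (sN_half2 (phi' (ad i pi)) K (fun a => proj1 (phi'_range _ a))
      (fun e a H => phi'_anti _ _ _ _ (le_n _) H)). fold M in H. change (fun b : nat => phi' (ad i pi) b) with (phi' (ad i pi)). lra.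
  - unfold sN at 1. rewrite Rsum_scal. fold (sN (S K) (fun i => Hf (ad i pi))).
    change (sN (S K) (fun i => Hf (ad i pi))) with (Fh Hf (S K) pi).
    pose proof (Fh_up2 Hf Hf_pos pi (S K) ltac:(lia)).
    pose proof (sN_half2 Hf K Hf_pos Hf_anti). fold M in H0. unfold Sg. lra.
Qed.

Lemma Gamma_low p : In p (lattice n eps) -> Sg <= INR (length (Gamma n r eps p)).
Proof. destruct p as [pi pj]. rewrite in_lattice. fold K. intros [Hi Hj].
  rewrite Gamma_count. simpl fst; simpl snd.
  apply Rle_trans with (sN (S K) (fun i => Hf (ad i pi))).
  - change (sN (S K) (fun i => Hf (ad i pi))) with (Fh Hf (S K) pi).
    apply Fh_low; auto. apply Hf_pos.
  - apply sN_le. intros i _.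
    change (sN (S K) (fun j => phi' (ad i pi) (ad j pj))) with (Fh (phi' (ad i pi)) (S K) pj).
    apply Fh_low; auto. intros; apply phi'_range.
Qed.

Definition Lsz : R := INR (length (lattice n eps)).

Lemma Lsz_eq : Lsz = INR (S K) * INR (S K).
Proof. unfold Lsz, lattice. rewrite (@length_prod nat nat), length_seq, mult_INR. reflexivity. Qed.

Definition Tg : R := Rsum (lattice n eps) (fun q => INR (length (Gamma n r eps q))).

Lemma Tg_bounds : Lsz * Sg <= Tg <= Lsz * (16 * Sg).
Proof. unfold Tg, Lsz. rewrite <- !Rsum_const. split; apply Rsum_le_in; intros.
  apply Gamma_low; auto. apply Gamma_up; auto. Qed.

Lemma Lsz_pos : 1 <= Lsz.
Proof. rewrite Lsz_eq. pose proof (pos_INR K). rewrite S_INR. nra. Qed.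

Lemma pi_low p : In p (lattice n eps) -> 1 / (16 * Lsz) <= pi_stat n r eps p.
Proof. intros Hp. unfold pi_stat. fold Tg. pose proof Tg_bounds. pose proof Sg_pos. pose proof Lsz_pos.
  pose proof (Gamma_low p Hp). unfold Rdiv. apply Rmult_le_reg_r with (16 * Lsz * Tg). nra.
  field_simplify; try nra. Qed.

Lemma pi_up p : In p (lattice n eps) -> pi_stat n r eps p <= 16 / Lsz.
Proof. intros Hp. unfold pi_stat. fold Tg. pose proof Tg_bounds. pose proof Sg_pos. pose proof Lsz_pos.
  pose proof (Gamma_up p Hp). unfold Rdiv. apply Rmult_le_reg_r with (Lsz * Tg). nra.
  field_simplify; try nra. Qed.

Lemma pi_pos p : In p (lattice n eps) -> 0 <= pi_stat n r eps p.
Proof. intros Hp. pose proof (pi_low p Hp). pose proof Lsz_pos.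
  assert (0 < 1 / (16 * Lsz)) by (apply Rdiv_lt_0_compat; lra). lra. Qed.

Lemma pi_sum : Rsum (lattice n eps) (pi_stat n r eps) = 1.
Proof. unfold pi_stat. fold Tg. pose proof Tg_bounds. pose proof Sg_pos. pose proof Lsz_pos.
  unfold Rdiv. rewrite (Rsum_ext_in _ _ (fun x => / Tg * INR (length (Gamma n r eps x)))) by (intros; ring).
  rewrite Rsum_scal. fold Tg. field. nra. Qed.
End Geo.


Definition iopen (x y : R) (i : nat) : R :=
  if Rlt_dec x (INR i) then if Rlt_dec (INR i) y then 1 else 0 else 0.
Definition iclosed (x y : R) (i : nat) : R :=
  if Rle_dec x (INR i) then if Rle_dec (INR i) y then 1 else 0 else 0.

Lemma iopen_range x y i : 0 <= iopen x y i <= 1.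
Proof. unfold iopen. repeat match goal with |- context [Rlt_dec ?a ?b] => destruct (Rlt_dec a b) end; lra. Qed.
Lemma iclosed_range x y i : 0 <= iclosed x y i <= 1.
Proof. unfold iclosed. repeat match goal with |- context [Rle_dec ?a ?b] => destruct (Rle_dec a b) end; lra. Qed.

Lemma cnt_low x y : 0 <= x -> forall N z, z <= INR N -> z <= y -> z - x - 1 <= sN N (iopen x y).
Proof. intros Hx N. induction N; intros z Hz Hzy.
  - rewrite sN_0. simpl in Hz. lra.
  - rewrite sN_S. pose proof (sN_nonneg N (iopen x y) (fun a => proj1 (iopen_range x y a))).
    rewrite S_INR in Hz. destruct (Rle_dec z (INR N)).
    + pose proof (IHN z r Hzy). pose proof (iopen_range x y N). lra.
    + destruct (Rlt_dec x (INR N)).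
      * assert (iopen x y N = 1). { unfold iopen. repeat match goal with |- context [Rlt_dec ?a ?b] => destruct (Rlt_dec a b) end; lra. }
        pose proof (IHN (INR N) (Rle_refl _) ltac:(lra)). lra.
      * pose proof (iopen_range x y N). lra.
Qed.

Lemma cnt_up_aux x y : forall N, sN N (iclosed x y) <= Rmax 0 (Rmin (INR N) (y + 1) - x).
Proof. induction N.
  - rewrite sN_0. apply Rmax_l.
  - rewrite sN_S, S_INR. unfold iclosed at 2. revert IHN.
    unfold Rmax, Rmin. destruct (Rle_dec x (INR N)); destruct (Rle_dec (INR N) y);
    intros; repeat match goal with |- context [Rle_dec ?a ?b] => destruct (Rle_dec a b)
      | H : context [Rle_dec ?a ?b] |- _ => destruct (Rle_dec a b) end; lra.
Qed.

Lemma cnt_up x y N : x <= y -> sN N (iclosed x y) <= y - x + 1.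
Proof. intros H. eapply Rle_trans; [apply cnt_up_aux|]. unfold Rmax, Rmin.
  repeat match goal with |- context [Rle_dec ?a ?b] => destruct (Rle_dec a b) end; lra. Qed.


Lemma INR_Ztonat z : (0 <= z)%Z -> INR (Z.to_nat z) = IZR z.
Proof. intros. rewrite INR_IZR_INZ, Z2Nat.id; auto. Qed.

Lemma lat_K n eps : 0 < eps ->
  INR (lat_bound n eps) <= sqrt (INR n) / eps < INR (lat_bound n eps) + 1.
Proof. intros He. unfold lat_bound, Rfloor. set (v := sqrt (INR n) / eps).
  assert (0 <= v) by (unfold v, Rdiv; apply Rmult_le_pos; [apply sqrt_pos| left; apply Rinv_0_lt_compat; auto]).
  destruct (archimed v) as [H1 H2].
  assert (0 < up v)%Z by (apply lt_IZR; simpl; lra).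
  rewrite INR_Ztonat by lia. rewrite minus_IZR. simpl. lra. Qed.

Lemma m_bounds n Rr : 0 < sqrt (5 * INR n) / Rr ->
  sqrt (5 * INR n) / Rr <= INR (num_cells n Rr) < sqrt (5 * INR n) / Rr + 1.
Proof. intros Hv. unfold num_cells, Rceil, Rfloor. set (v := sqrt (5 * INR n) / Rr) in *.
  destruct (archimed (- v)) as [H1 H2].
  assert (0 < - (up (- v) - 1))%Z by (apply lt_IZR; rewrite opp_IZR, minus_IZR; simpl; lra).
  rewrite INR_Ztonat by lia. rewrite opp_IZR, minus_IZR. simpl. lra. Qed.


Lemma sqrt5_b : 2 <= sqrt 5 <= 3.
Proof. split. - rewrite <- sqrt_square with 2 by lra. apply sqrt_le_1_alt. lra.
  - rewrite <- sqrt_square with 3 by lra. apply sqrt_le_1_alt. lra. Qed.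

Lemma div_lt_l x t e : 0 < e -> x / e < t -> x < t * e.
Proof. intros He H. replace x with (x / e * e) by (field; lra). apply Rmult_lt_compat_r; auto. Qed.
Lemma div_lt_r x t e : 0 < e -> t < x / e -> t * e < x.
Proof. intros He H. replace x with (x / e * e) by (field; lra). apply Rmult_lt_compat_r; auto. Qed.
Lemma div_le_l x t e : 0 < e -> x <= t * e -> x / e <= t.
Proof. intros He H. replace t with (t * e / e) by (field; lra). unfold Rdiv. apply Rmult_le_compat_r; auto.
  left; apply Rinv_0_lt_compat; auto. Qed.
Lemma div_le_r x t e : 0 < e -> t * e <= x -> t <= x / e.
Proof. intros He H. replace t with (t * e / e) by (field; lra). unfold Rdiv. apply Rmult_le_compat_r; auto.
  left; apply Rinv_0_lt_compat; auto. Qed.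

Lemma sN_prod N N' u v : sN N (fun i => sN N' (fun j => u i * v j)) = sN N u * sN N' v.
Proof. unfold sN. rewrite (Rsum_ext_in _ _ (fun i => u i * Rsum (seq 0 N') v)).
  - rewrite (Rsum_ext_in _ _ (fun i => Rsum (seq 0 N') v * u i)) by (intros; ring).
    rewrite Rsum_scal. ring.
  - intros. apply Rsum_scal. Qed.

Lemma iopen_01 x y i : iopen x y i = 0 \/ (iopen x y i = 1 /\ x < INR i < y).
Proof. unfold iopen. repeat match goal with |- context [Rlt_dec ?a ?b] => destruct (Rlt_dec a b) end; auto. Qed.

Definition gc (asg : pt -> nat * nat) (a b : nat) (p : pt) : R :=
  if andb (Nat.eqb (fst (asg p)) a) (Nat.eqb (snd (asg p)) b) then 1 else 0.

Lemma gc_range asg a b p : 0 <= gc asg a b p <= 1.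
Proof. unfold gc. destruct (_ && _)%bool; lra. Qed.

Section Cell.
Variables (n : nat) (r eps Rr : R) (asg : pt -> nat * nat).
Hypothesis rpos : 0 <= r.
Hypothesis epos : 0 < eps.
Hypothesis eps1 : eps <= 1.
Hypothesis R8 : 8 <= Rr.
Hypothesis Rn : Rr <= sqrt (INR n).
Hypothesis Hval : valid_assignment n eps Rr asg.
Let K := lat_bound n eps.
Let m := num_cells n Rr.
Let s := cell_side n Rr.

Lemma sq_facts : 8 <= sqrt (INR n) /\ sqrt (5 * INR n) = sqrt 5 * sqrt (INR n).
Proof. split. lra. rewrite sqrt_mult; auto; try lra. apply pos_INR. Qed.

Lemma m_facts : sqrt 5 * sqrt (INR n) / Rr <= INR m /\ INR m <= 4 * sqrt (INR n) / Rr.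
Proof. destruct sq_facts as [H1 H2]. pose proof sqrt5_b as H5.
  assert (Hv : 0 < sqrt (5 * INR n) / Rr) by (rewrite H2; apply Rdiv_lt_0_compat; nra).
  pose proof (m_bounds n Rr Hv) as H3. fold m in H3. rewrite H2 in H3. split; [lra|].
  assert (1 <= sqrt (INR n) / Rr) by (apply div_le_r; lra).
  assert (sqrt 5 * sqrt (INR n) / Rr <= 3 * (sqrt (INR n) / Rr)).
  { unfold Rdiv. rewrite <- Rmult_assoc. apply Rmult_le_compat_r. left; apply Rinv_0_lt_compat; lra. nra. }
  unfold Rdiv in *. lra. Qed.

Lemma s_facts : Rr / 4 <= s <= Rr / 2.
Proof. destruct sq_facts as [H1 H2]. pose proof sqrt5_b. destruct m_facts as [Hm1 Hm2].
  assert (HM : 2 * sqrt (INR n) <= INR m * Rr).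
  { apply Rle_trans with (sqrt 5 * sqrt (INR n)). nra.
    apply (Rmult_le_compat_r Rr) in Hm1; [|lra]. replace (sqrt 5 * sqrt (INR n) / Rr * Rr) with (sqrt 5 * sqrt (INR n)) in Hm1 by (field; lra). lra. }
  assert (HM2 : INR m * Rr <= 4 * sqrt (INR n)).
  { apply (Rmult_le_compat_r Rr) in Hm2; [|lra]. replace (4 * sqrt (INR n) / Rr * Rr) with (4 * sqrt (INR n)) in Hm2 by (field; lra). lra. }
  assert (0 < INR m) by nra.
  assert (Hs : s * INR m = sqrt (INR n)) by (unfold s, cell_side; fold m; field; lra).
  split; nra. Qed.

Lemma K_facts : sqrt (INR n) < (INR K + 1) * eps <= 2 * sqrt (INR n).
Proof. pose proof (lat_K n eps epos) as [H1 H2]. fold K in H1, H2. destruct sq_facts.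
  split. - apply div_lt_l in H2; auto.
  - apply (Rmult_le_compat_r eps) in H1; [|lra]. replace (sqrt (INR n) / eps * eps) with (sqrt (INR n)) in H1 by (field; lra). nra. Qed.

Lemma valid_at i j : (i <= K)%nat -> (j <= K)%nat ->
  (fst (asg (i,j)) < m)%nat /\ (snd (asg (i,j)) < m)%nat /\
  INR (fst (asg (i,j))) * s <= INR i * eps <= INR (S (fst (asg (i,j)))) * s /\
  INR (snd (asg (i,j))) * s <= INR j * eps <= INR (S (snd (asg (i,j)))) * s.
Proof. intros Hi Hj. apply (Hval (i,j)). apply in_lattice. auto. Qed.

Lemma pin_nat a a' x : 0 < s -> INR a * s < x < INR (S a) * s -> INR a' * s <= x <= INR (S a') * s -> a' = a.
Proof. intros Hs H1 H2.
  assert (INR a' < INR (S a)) by (apply (Rmult_lt_reg_r s); auto; lra).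
  assert (INR a < INR (S a')) by (apply (Rmult_lt_reg_r s); auto; lra).
  apply INR_lt in H. apply INR_lt in H0. lia. Qed.

Lemma N_low a b : (a < m)%nat -> (b < m)%nat -> (s / eps - 1) ^ 2 <= Rsum (lattice n eps) (gc asg a b).
Proof. intros Ha Hb. pose proof s_facts as Hs. destruct K_facts as [HK1 HK2].
  set (xa := INR a * s / eps). set (ya := INR (S a) * s / eps).
  set (xb := INR b * s / eps). set (yb := INR (S b) * s / eps).
  unfold lattice. rewrite (@Rsum_prod nat nat). fold K.
  apply Rle_trans with (sN (S K) (fun i => sN (S K) (fun j => iopen xa ya i * iopen xb yb j))).
  2:{ apply sN_le. intros i Hi. apply sN_le. intros j Hj.
      destruct (iopen_01 xa ya i) as [->|[-> [H1 H2]]]; [rewrite Rmult_0_l; apply gc_range|].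
      destruct (iopen_01 xb yb j) as [->|[-> [H3 H4]]]; [rewrite Rmult_0_r; apply gc_range|].
      destruct (valid_at i j ltac:(lia) ltac:(lia)) as (_ & _ & Hx & Hy).
      unfold xa, ya, xb, yb in *.
      apply div_lt_l in H1; auto. apply div_lt_r in H2; auto. apply div_lt_l in H3; auto. apply div_lt_r in H4; auto.
      assert (fst (asg (i,j)) = a) by (eapply pin_nat with (x := INR i * eps); eauto; lra).
      assert (snd (asg (i,j)) = b) by (eapply pin_nat with (x := INR j * eps); eauto; lra).
      unfold gc. rewrite H, H0, !Nat.eqb_refl. simpl. lra. }
  rewrite sN_prod.
  assert (Hm : INR m * s = sqrt (INR n)).
  { unfold s, cell_side. fold m. destruct m_facts. destruct sq_facts. pose proof sqrt5_b.
    assert (0 < INR m). { eapply Rlt_le_trans; [|apply H]. apply Rdiv_lt_0_compat; nra. } field. lra. }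
  assert (Hy : forall c, (c < m)%nat -> INR (S c) * s / eps <= INR (S K)).
  { intros c Hc. apply div_le_l; auto. rewrite (S_INR K).
    apply Rle_trans with (INR m * s). apply Rmult_le_compat_r. lra. apply le_INR. lia. lra. }
  assert (Hdiff : forall c, INR (S c) * s / eps - INR c * s / eps - 1 = s / eps - 1) by (intros; rewrite S_INR; field; lra).
  assert (Hnn : forall c, 0 <= INR c * s / eps) by (intros; apply Rmult_le_pos; [apply Rmult_le_pos; [apply pos_INR|lra]| left; apply Rinv_0_lt_compat; lra]).
  pose proof (cnt_low xa ya (Hnn a) (S K) ya (Hy a Ha) (Rle_refl _)).
  pose proof (cnt_low xb yb (Hnn b) (S K) yb (Hy b Hb) (Rle_refl _)).
  unfold xa, ya, xb, yb in *. rewrite Hdiff in H, H0.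
  assert (0 <= s / eps - 1). { assert (1 <= s / eps) by (apply div_le_r; lra). lra. }
  unfold pow. rewrite Rmult_1_r. apply Rmult_le_compat; lra. Qed.

Lemma N_up a b : Rsum (lattice n eps) (gc asg a b) <= (s / eps + 1) ^ 2.
Proof. pose proof s_facts as Hs.
  set (xa := INR a * s / eps). set (ya := INR (S a) * s / eps).
  set (xb := INR b * s / eps). set (yb := INR (S b) * s / eps).
  unfold lattice. rewrite (@Rsum_prod nat nat). fold K.
  apply Rle_trans with (sN (S K) (fun i => sN (S K) (fun j => iclosed xa ya i * iclosed xb yb j))).
  { apply sN_le. intros i Hi. apply sN_le. intros j Hj.
    unfold gc. destruct (Nat.eqb (fst (asg (i, j))) a) eqn:E1; [|simpl; pose proof (iclosed_range xa ya i); pose proof (iclosed_range xb yb j); nra].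
    destruct (Nat.eqb (snd (asg (i, j))) b) eqn:E2; [|simpl; pose proof (iclosed_range xa ya i); pose proof (iclosed_range xb yb j); nra].
    apply Nat.eqb_eq in E1, E2. simpl.
    destruct (valid_at i j ltac:(lia) ltac:(lia)) as (_ & _ & Hx & Hy). rewrite E1 in Hx. rewrite E2 in Hy.
    unfold iclosed, xa, ya, xb, yb.
    repeat match goal with |- context [Rle_dec ?a ?b] => destruct (Rle_dec a b) end; try lra;
    exfalso; match goal with H : ~ _ |- _ => apply H end;
    first [apply div_le_l | apply div_le_r]; auto; lra. }
  rewrite sN_prod.
  assert (Hdiff : forall c, INR (S c) * s / eps - INR c * s / eps + 1 = s / eps + 1) by (intros; rewrite S_INR; field; lra).
  assert (Hxy : forall c, INR c * s / eps <= INR (S c) * s / eps).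
  { intros. unfold Rdiv. apply Rmult_le_compat_r. left; apply Rinv_0_lt_compat; lra. apply Rmult_le_compat_r. lra. apply le_INR; lia. }
  pose proof (cnt_up xa ya (S K) (Hxy a)). pose proof (cnt_up xb yb (S K) (Hxy b)).
  unfold xa, ya, xb, yb in *. rewrite Hdiff in H, H0.
  pose proof (sN_nonneg (S K) (iclosed (INR a * s / eps) (INR (S a) * s / eps)) (fun i => proj1 (iclosed_range _ _ i))).
  pose proof (sN_nonneg (S K) (iclosed (INR b * s / eps) (INR (S b) * s / eps)) (fun i => proj1 (iclosed_range _ _ i))).
  unfold pow. rewrite Rmult_1_r. apply Rmult_le_compat; lra. Qed.
End Cell.


Lemma exp_pow k x : exp x ^ k = exp (INR k * x).
Proof. induction k. simpl. rewrite Rmult_0_l, exp_0. reflexivity.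
  simpl pow. rewrite IHk, S_INR, <- exp_plus. f_equal. ring. Qed.

Lemma forallb_false {A} (f : A -> bool) l : forallb f l = false -> exists x, In x l /\ f x = false.
Proof. induction l; simpl; [discriminate|]. destruct (f a) eqn:E; simpl.
  - intros H. destruct (IHl H) as [x [Hx Hf]]. eauto.
  - intros _. exists a. auto. Qed.

Lemma exp_sum (g : pt -> R) t l : exp (t * Rsum l g) = prodl (fun p => exp (t * g p)) l.
Proof. induction l; simpl prodl. rewrite Rsum_nil, Rmult_0_r, exp_0. reflexivity.
  rewrite Rsum_cons, <- IHl, <- exp_plus. f_equal. ring. Qed.

Lemma prodl_pos G l : (forall p, 0 < G p) -> 0 < prodl G l.
Proof. intros H. induction l; simpl. lra. apply Rmult_lt_0_compat; auto. Qed.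

Lemma exp_ge1 x : 0 <= x -> 1 <= exp x.
Proof. intros. pose proof (exp_ineq1_le x). lra. Qed.

Lemma expm1_le : exp (-1) <= 1/2.
Proof. replace (-1) with (- (1)) by ring. rewrite exp_Ropp. pose proof (exp_ineq1_le 1).
  apply Rmult_le_reg_r with (exp 1). lra. rewrite Rinv_l by lra. lra. Qed.


Lemma exp_mono x y : x <= y -> exp x <= exp y.
Proof. intros [H|H]. left; apply exp_increasing; auto. subst; lra. Qed.

Lemma Rleb_false x y : Rleb x y = false -> y < x.
Proof. unfold Rleb. destruct (Rle_dec x y); [discriminate|]. intros; lra. Qed.

Definition lamc : R := 16384.

Definition Tterm (asg : pt -> nat * nat) (Rr : R) a b l : R :=
  exp (Rr ^ 2 / lamc) * prodl (fun p => exp (-1 * gc asg a b p)) l +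
  exp (- (lamc * Rr ^ 2)) * prodl (fun p => exp (1 * gc asg a b p)) l.

Lemma Tterm_pos asg Rr a b l : 0 <= Tterm asg Rr a b l.
Proof. unfold Tterm. pose proof (prodl_pos (fun p => exp (-1 * gc asg a b p)) l (fun p => exp_pos _)).
  pose proof (prodl_pos (fun p => exp (1 * gc asg a b p)) l (fun p => exp_pos _)).
  pose proof (exp_pos (Rr ^ 2 / lamc)). pose proof (exp_pos (- (lamc * Rr ^ 2))). nra. Qed.

Lemma step1 m asg Rr l :
  1 - (if all_cells_balanced m asg Rr lamc l then 1 else 0) <=
  Rsum (seq 0 m) (fun a => Rsum (seq 0 m) (fun b => Tterm asg Rr a b l)).
Proof.
  assert (Hp : forall a, 0 <= Rsum (seq 0 m) (fun b => Tterm asg Rr a b l))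
    by (intros; apply Rsum_nonneg; intros; apply Tterm_pos).
  destruct (all_cells_balanced m asg Rr lamc l) eqn:E.
  - pose proof (Rsum_nonneg (seq 0 m) _ (fun a _ => Hp a)). lra.
  - unfold all_cells_balanced in E. apply forallb_false in E as [a [Ha E]].
    apply forallb_false in E as [b [Hb E]].
    eapply Rle_trans; [|apply Rsum_ge_elem with (y := a); auto].
    eapply Rle_trans; [|apply Rsum_ge_elem with (y := b); auto; intros; apply Tterm_pos].
    unfold Tterm. rewrite <- !exp_sum. unfold cell_count in E. rewrite length_filter_R in E.
    fold (gc asg a b) in E.
    set (X := Rsum l (gc asg a b)) in *.
    rewrite <- !exp_plus.
    pose proof (exp_pos (Rr ^ 2 / lamc + -1 * X)). pose proof (exp_pos (- (lamc * Rr ^ 2) + 1 * X)).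
    apply andb_false_iff in E as [E|E]; apply Rleb_false in E.
    + pose proof (exp_ge1 (Rr ^ 2 / lamc + -1 * X) ltac:(lra)). lra.
    + pose proof (exp_ge1 (- (lamc * Rr ^ 2) + 1 * X) ltac:(lra)). lra.
Qed.


Lemma div_mono A B C D : 0 <= C <= A -> 0 < B <= D -> C / D <= A / B.
Proof. intros. unfold Rdiv. apply Rmult_le_compat; try lra.
  left; apply Rinv_0_lt_compat; lra. apply Rinv_le_contravar; lra. Qed.

Section Main.
Variables (n : nat) (r eps Rr : R) (asg : pt -> nat * nat).
Hypothesis rpos : 0 <= r.
Hypothesis epos : 0 < eps.
Hypothesis eps1 : eps <= 1.
Hypothesis R8 : 8 <= Rr.
Hypothesis Rn : Rr <= sqrt (INR n).
Hypothesis Hval : valid_assignment n eps Rr asg.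
Let L := lattice n eps.
Let w := pi_stat n r eps.
Let m := num_cells n Rr.
Let K := lat_bound n eps.
Let s := cell_side n Rr.

Definition qm a b := Rsum (lattice n eps) (fun p => pi_stat n r eps p * gc asg a b p).

Lemma qm_bounds a b : (a < m)%nat -> (b < m)%nat ->
  0 <= qm a b /\ Rr ^ 2 / 4096 <= INR n * qm a b /\ INR n * qm a b <= 16 * Rr ^ 2.
Proof. intros Ha Hb.
  pose proof (N_low n eps Rr asg epos eps1 R8 Rn Hval a b Ha Hb) as HNl.
  pose proof (N_up n eps Rr asg epos eps1 R8 Rn Hval a b) as HNu.
  pose proof (s_facts n eps Rr epos eps1 R8 Rn) as Hs.
  pose proof (K_facts n eps Rr epos eps1 R8 Rn) as HK.
  pose proof (Lsz_eq n eps) as HL. rewrite S_INR in HL. fold K s in HNl, HNu, Hs, HK, HL.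
  set (N := Rsum (lattice n eps) (gc asg a b)) in *.
  set (k1 := INR K + 1) in *.
  assert (Hk1 : 0 < k1) by (unfold k1; pose proof (pos_INR K); lra).
  assert (Hsq : sqrt (INR n) * sqrt (INR n) = INR n) by (apply sqrt_sqrt, pos_INR).
  assert (Hq1 : 1 / (16 * Lsz n eps) * N <= qm a b).
  { unfold qm, N. rewrite <- Rsum_scal. apply Rsum_le_in. intros p Hp.
    pose proof (pi_low n r eps epos rpos p Hp). pose proof (gc_range asg a b p). nra. }
  assert (Hq2 : qm a b <= 16 / Lsz n eps * N).
  { unfold qm, N. rewrite <- Rsum_scal. apply Rsum_le_in. intros p Hp.
    pose proof (pi_up n r eps epos rpos p Hp). pose proof (gc_range asg a b p).
    pose proof (pi_pos n r eps epos rpos p Hp). nra. }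
  assert (HN0 : 0 <= N) by (unfold N; apply Rsum_nonneg; intros; apply gc_range).
  assert (HLp : 0 < Lsz n eps) by (rewrite HL; nra).
  assert (0 <= 1 / (16 * Lsz n eps)) by (left; apply Rdiv_lt_0_compat; lra).
  split; [nra|]. split.
  - set (u := s / eps - 1) in *.
    assert (Hue : u * eps = s - eps) by (unfold u; field; lra).
    assert (HuR : Rr / 8 <= u * eps) by lra.
    assert (Hu0 : 0 <= u) by (apply Rmult_le_reg_r with eps; lra).
    assert (INR n * (1 / (16 * Lsz n eps) * N) <= INR n * qm a b) by (apply Rmult_le_compat_l; [apply pos_INR|lra]).
    eapply Rle_trans; [|apply H0].
    eapply Rle_trans; [|apply Rmult_le_compat_l; [apply pos_INR|]; apply Rmult_le_compat_l; [apply H|apply HNl]].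
    rewrite HL.
    replace (INR n * (1 / (16 * (k1 * k1)) * u ^ 2)) with (INR n * (u * eps) ^ 2 / (16 * (k1 * eps) ^ 2)) by (field; lra).
    replace (Rr ^ 2 / 4096) with (INR n * (Rr / 8) ^ 2 / (16 * (4 * INR n))) by (field; nra).
    apply div_mono.
    + split. apply Rmult_le_pos. apply pos_INR. nra. apply Rmult_le_compat_l. apply pos_INR. apply pow_incr. lra.
    + split. nra. apply Rmult_le_compat_l. lra. nra.
  - assert (INR n * qm a b <= INR n * (16 / Lsz n eps * N)) by (apply Rmult_le_compat_l; [apply pos_INR|lra]).
    eapply Rle_trans; [apply H0|].
    assert (0 <= 16 / Lsz n eps) by (left; apply Rdiv_lt_0_compat; lra).
    eapply Rle_trans; [apply Rmult_le_compat_l; [apply pos_INR|]; apply Rmult_le_compat_l; [apply H1|apply HNu]|].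
    rewrite HL.
    replace (INR n * (16 / (k1 * k1) * (s / eps + 1) ^ 2)) with (16 * (INR n * (s + eps) ^ 2) / (k1 * eps) ^ 2) by (field; lra).
    apply Rmult_le_reg_r with ((k1 * eps) ^ 2). nra.
    unfold Rdiv. rewrite Rmult_assoc, Rinv_l by nra. rewrite Rmult_1_r.
    assert ((s + eps) ^ 2 <= Rr ^ 2) by (apply pow_incr; lra).
    assert (INR n <= (k1 * eps) ^ 2) by nra.
    assert (INR n * (s + eps) ^ 2 <= (k1 * eps) ^ 2 * Rr ^ 2).
    { apply Rmult_le_compat; try lra. apply pos_INR. nra. }
    lra.
Qed.
End Main.


Lemma sum_exp n r eps asg a b t : 0 < eps -> 0 <= r ->
  Rsum (lattice n eps) (fun p => pi_stat n r eps p * exp (t * gc asg a b p)) = 1 + (exp t - 1) * qm n r eps asg a b.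
Proof. intros He Hr. unfold qm.
  rewrite (Rsum_ext_in _ _ (fun p => pi_stat n r eps p + (exp t - 1) * (pi_stat n r eps p * gc asg a b p))).
  - rewrite Rsum_plus, Rsum_scal, pi_sum; auto.
  - intros p _. unfold gc. destruct (_ && _)%bool.
    + rewrite Rmult_1_r. ring.
    + rewrite Rmult_0_r, exp_0. ring. Qed.

Lemma pow_exp_bound x y k : 0 <= x -> x <= exp y -> x ^ k <= exp (INR k * y).
Proof. intros. rewrite <- exp_pow. apply pow_incr. lra. Qed.

Section T.
Variables (n : nat) (r eps Rr : R) (asg : pt -> nat * nat).
Hypothesis rpos : 0 <= r.
Hypothesis epos : 0 < eps.
Hypothesis eps1 : eps <= 1.
Hypothesis R8 : 8 <= Rr.
Hypothesis Rn : Rr <= sqrt (INR n).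
Hypothesis Hval : valid_assignment n eps Rr asg.

Lemma term_bound a b : (a < num_cells n Rr)%nat -> (b < num_cells n Rr)%nat ->
  exp (Rr ^ 2 / lamc) * (Rsum (lattice n eps) (fun p => pi_stat n r eps p * exp (-1 * gc asg a b p))) ^ n +
  exp (- (lamc * Rr ^ 2)) * (Rsum (lattice n eps) (fun p => pi_stat n r eps p * exp (1 * gc asg a b p))) ^ n
  <= 2 * exp (- (Rr ^ 2 / 16384)).
Proof. intros Ha Hb.
  destruct (qm_bounds n r eps Rr asg rpos epos eps1 R8 Rn Hval a b Ha Hb) as (Hq0 & Hq1 & Hq2).
  set (q := qm n r eps asg a b) in *.
  assert (Hnn : forall t, 0 <= Rsum (lattice n eps) (fun p => pi_stat n r eps p * exp (t * gc asg a b p))).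
  { intros. apply Rsum_nonneg. intros p Hp. apply Rmult_le_pos. apply pi_pos; auto. left; apply exp_pos. }
  pose proof (Hnn (-1)) as H1. pose proof (Hnn 1) as H2.
  rewrite sum_exp in H1, H2 |- * by auto. fold q in H1, H2 |- *.
  pose proof (pow_exp_bound _ ((exp (-1) - 1) * q) n H1 (exp_ineq1_le _)) as P1.
  pose proof (pow_exp_bound _ ((exp 1 - 1) * q) n H2 (exp_ineq1_le _)) as P2.
  pose proof expm1_le. pose proof exp_le_3. pose proof (exp_pos (-1)).
  pose proof (exp_pos (Rr ^ 2 / lamc)). pose proof (exp_pos (- (lamc * Rr ^ 2))).
  assert (T1 : exp (Rr ^ 2 / lamc) * (1 + (exp (-1) - 1) * q) ^ n <= exp (- (Rr ^ 2 / 16384))).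
  { eapply Rle_trans. apply Rmult_le_compat_l. lra. apply P1. rewrite <- exp_plus. apply exp_mono.
    unfold lamc. pose proof (pos_INR n).
    assert (INR n * ((exp (-1) - 1) * q) <= - (INR n * q) / 2) by nra. lra. }
  assert (T2 : exp (- (lamc * Rr ^ 2)) * (1 + (exp 1 - 1) * q) ^ n <= exp (- (Rr ^ 2 / 16384))).
  { eapply Rle_trans. apply Rmult_le_compat_l. lra. apply P2. rewrite <- exp_plus. apply exp_mono.
    unfold lamc. pose proof (pos_INR n).
    assert (INR n * ((exp 1 - 1) * q) <= 2 * (INR n * q)) by nra.
    assert (0 <= Rr ^ 2) by nra. lra. }
  rewrite sum_exp by auto. fold q. lra. Qed.
End T.


Lemma ts_Tterm L w k asg Rr a b :
  tuple_sum L w k (Tterm asg Rr a b) =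
  exp (Rr ^ 2 / lamc) * (Rsum L (fun p => w p * exp (-1 * gc asg a b p))) ^ k +
  exp (- (lamc * Rr ^ 2)) * (Rsum L (fun p => w p * exp (1 * gc asg a b p))) ^ k.
Proof. unfold Tterm. rewrite ts_plus, !ts_scal, !ts_prod. reflexivity. Qed.

Lemma final_alg N M d : 6 <= N -> 0 <= M -> M * M <= N / 4 -> 0 <= d -> d * N ^ 5 <= 1 ->
  1 - M * (M * (2 * d)) >= 1 - 1 / N ^ 2.
Proof. intros HN HM HMM Hd Hd5.
  assert (H2 : 0 < N ^ 2) by nra.
  assert (M * (M * (2 * d)) * N ^ 2 <= 1).
  { assert (M * (M * (2 * d)) * N ^ 2 <= (N / 4) * (2 * d) * N ^ 2).
    { replace (M * (M * (2 * d)) * N ^ 2) with ((M * M) * (2 * d * N ^ 2)) by ring.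
      replace (N / 4 * (2 * d) * N ^ 2) with ((N / 4) * (2 * d * N ^ 2)) by ring.
      apply Rmult_le_compat_r; nra. }
    assert (N / 4 * (2 * d) * N ^ 2 <= d * N ^ 5 / 2).
    { replace (d * N ^ 5 / 2) with (N / 4 * (2 * d) * N ^ 2 * (N ^ 2)) by (field).
      assert (1 <= N ^ 2) by nra. assert (0 <= N / 4 * (2 * d) * N ^ 2) by (apply Rmult_le_pos; nra).
      nra. }
    lra. }
  assert (M * (M * (2 * d)) <= 1 / N ^ 2).
  { apply Rmult_le_reg_r with (N ^ 2); auto. replace (1 / N ^ 2 * N ^ 2) with 1 by (field; lra). lra. }
  lra. Qed.

Theorem mainTheorem4 :
  exists (c lam : R), 0 < c /\ 1 <= lam /\
  exists N : nat, forall n : nat, (N <= n)%nat ->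
  forall (r eps Rr : R),
    0 <= r -> 0 < eps -> eps <= 1 -> eps < Rr ->
    c * sqrt (ln (INR n)) <= Rr -> Rr <= sqrt (INR n) ->
    forall asg : pt -> nat * nat,
      valid_assignment n eps Rr asg ->
      prob_positions n r eps
        (all_cells_balanced (num_cells n Rr) asg Rr lam)
      >= 1 - 1 / (INR n) ^ 2.
Proof.
  exists 300, lamc. split; [lra|]. split; [unfold lamc; lra|]. exists 6%nat.
  intros n Hn r eps Rr Hr He He1 HeR Hc HRn asg Hval.
  assert (HN : 6 <= INR n) by (replace 6 with (INR 6) by (simpl; ring); apply le_INR; auto).
  assert (Hln : 1 <= ln (INR n)).
  { destruct (Rle_lt_dec 1 (ln (INR n))) as [h|h]; auto.
    apply exp_increasing in h. rewrite exp_ln in h by lra. pose proof exp_le_3. lra. }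
  assert (Hsl : 1 <= sqrt (ln (INR n))) by (rewrite <- sqrt_1; apply sqrt_le_1_alt; lra).
  assert (R8 : 8 <= Rr) by lra.
  assert (HR2 : 90000 * ln (INR n) <= Rr ^ 2).
  { replace (90000 * ln (INR n)) with ((300 * sqrt (ln (INR n))) ^ 2).
    apply pow_incr; lra. rewrite Rpow_mult_distr. unfold pow at 2. rewrite Rmult_1_r, sqrt_sqrt by lra. ring. }
  set (m := num_cells n Rr).
  set (d := exp (- (Rr ^ 2 / 16384))).
  assert (Hw : forall p, In p (lattice n eps) -> 0 <= pi_stat n r eps p) by (intros; apply pi_pos; auto).
  unfold prob_positions.
  set (RS := fun l => Rsum (seq 0 m) (fun a => Rsum (seq 0 m) (fun b => Tterm asg Rr a b l))).
  assert (Hlow : tuple_sum (lattice n eps) (pi_stat n r eps) n (fun l => 1 + -1 * RS l) <=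
     tuple_sum (lattice n eps) (pi_stat n r eps) n (fun l => if all_cells_balanced m asg Rr lamc l then 1 else 0)).
  { apply ts_mono; auto. intros l. pose proof (step1 m asg Rr l). unfold RS. lra. }
  rewrite ts_plus, ts_scal, ts_const, pi_sum in Hlow by auto.
  unfold RS in Hlow. rewrite (ts_Rsum _ _ (seq 0 m) n (fun a l => Rsum (seq 0 m) (fun b => Tterm asg Rr a b l))) in Hlow.
  assert (Hsum : Rsum (seq 0 m) (fun a => tuple_sum (lattice n eps) (pi_stat n r eps) n
              (fun l => Rsum (seq 0 m) (fun b => Tterm asg Rr a b l))) <= INR m * (INR m * (2 * d))).
  { assert (Hc' : forall c, INR m * c = Rsum (seq 0 m) (fun _ => c)) by (intros; rewrite Rsum_const, length_seq; auto).
    rewrite Hc'. apply Rsum_le_in. intros a Ha.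
    rewrite ts_Rsum. rewrite Hc'. apply Rsum_le_in. intros b Hb.
    apply in_seq in Ha, Hb. rewrite ts_Tterm. apply term_bound; auto; try lra; lia. }
  destruct (m_facts n eps Rr He He1 R8 HRn) as [Hm1 Hm2]. fold m in Hm1, Hm2.
  assert (Hsn : 0 < sqrt (INR n)) by lra.
  assert (HmR : INR m <= sqrt (INR n) / 2).
  { eapply Rle_trans; [apply Hm2|]. apply div_le_l; [lra|].
    replace (sqrt (INR n) / 2 * Rr) with (sqrt (INR n) * (Rr / 2)) by field. nra. }
  assert (HMM : INR m * INR m <= INR n / 4).
  { pose proof (pos_INR m). assert (INR m * INR m <= (sqrt (INR n) / 2) * (sqrt (INR n) / 2)) by nra.
    replace (INR n / 4) with (sqrt (INR n) * sqrt (INR n) / 4) by (rewrite sqrt_sqrt; [field| apply pos_INR]). lra. }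
  assert (Hd5 : d * INR n ^ 5 <= 1).
  { assert (INR n ^ 5 = exp (INR 5 * ln (INR n))) by (rewrite <- exp_pow, exp_ln; auto; lra).
    rewrite H. unfold d. rewrite <- exp_plus. rewrite <- exp_0. apply exp_mono. simpl INR. lra. }
  pose proof (final_alg (INR n) (INR m) d HN (pos_INR m) HMM (Rlt_le _ _ (exp_pos _)) Hd5).
  rewrite pow1 in Hlow. unfold m in *. lra.
Qed.
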